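(* Let $S^2_{\geq 0}=\{(x,y,z)\in\mathbb{R}^3 : x^2+y^2+z^2=1,\ z\geq 0\}$ be the closed upper unit hemisphere. For any four points $P_1,P_2,P_3,P_4\in S^2_{\geq 0}$, $$\sum_{1\leq i<j\leq 4}|P_iP_j|\leq 4+4\sqrt{2},$$ where $|PQ|$ denotes the Euclidean distance, and the value $4+4\sqrt{2}$ is attained (e.g. by the four vertices of a square inscribed in the equator $\{z=0\}$). Thus the largest possible sum of the six pairwise distances between four points of $S^2_{\geq 0}$ is $4+4\sqrt{2}$. *)

(* Defs.v *)
From Stdlib Require Import Reals.
Open Scope R_scope.

Definition pt : Type := (R * R * R)%type.

Definition in_upper_hemisphere (p : pt) : Prop :=
  let '(x, y, z) := p in x ^ 2 + y ^ 2 + z ^ 2 = 1 /\ 0 <= z.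

Definition dist3 (p q : pt) : R :=
  let '(x1, y1, z1) := p in
  let '(x2, y2, z2) := q in
  sqrt ((x1 - x2) ^ 2 + (y1 - y2) ^ 2 + (z1 - z2) ^ 2).

Definition sum_pair_dists (p1 p2 p3 p4 : pt) : R :=
  dist3 p1 p2 + dist3 p1 p3 + dist3 p1 p4 +
  dist3 p2 p3 + dist3 p2 p4 + dist3 p3 p4.

(* Main.v *)
Require Import Defs.
From Stdlib Require Import Reals Lra Psatz.
Open Scope R_scope.
Ltac pos_tac := repeat (apply Rplus_le_le_0_compat || apply Rmult_le_pos || apply pow_le); try assumption; try lra.

Lemma LB_cert (a t : R) :
  0 <= ((1) + (-2/9)*a + (0)*t) -> 0 <= ((0) + (2/9)*a + (-58/45)*t) -> 0 <= ((0) + (0)*a + (58/45)*t) ->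
  0 <= 6*(3*(a-t)*((16-t-a)/2-t)^2 - 5*t*(a^2+2*((16-t-a)/2)^2) - 20*t^2*(16-t)) - (3*a+7*t)*(176-384*t-2*(a-(16-t-a)/2)^2).
Proof.
  intros H0 H1 H2.
  set (l0 := ((1) + (-2/9)*a + (0)*t)) in *.
  set (l1 := ((0) + (2/9)*a + (-58/45)*t)) in *.
  set (l2 := ((0) + (0)*a + (58/45)*t)) in *.
  replace (6*(3*(a-t)*((16-t-a)/2-t)^2 - 5*t*(a^2+2*((16-t-a)/2)^2) - 20*t^2*(16-t)) - (3*a+7*t)*(176-384*t-2*(a-(16-t-a)/2)^2)) with ((81641763/97556)*l2^7 + (105892839/24389)*l1^1*l2^6 + (464956119/48778)*l1^2*l2^5 + (1150354305/97556)*l1^3*l2^4 + (916260255/97556)*l1^4*l2^3 + (301239/58)*l1^5*l2^2 + (55404/29)*l1^6*l2^1 + (1377/4)*l1^7 + (63789363/24389)*l0^1*l2^6 + (308667753/24389)*l0^1*l1^1*l2^5 + (712479645/24389)*l0^1*l1^2*l2^4 + (1035930060/24389)*l0^1*l1^3*l2^3 + (33198255/841)*l0^1*l1^4*l2^2 + (602883/29)*l0^1*l1^5*l2^1 + (4617)*l0^1*l1^6 + (121724937/48778)*l0^2*l2^5 + (478660185/24389)*l0^2*l1^1*l2^4 + (3105077085/48778)*l0^2*l1^2*l2^3 + (164802195/1682)*l0^2*l1^3*l2^2 + (2059425/29)*l0^2*l1^4*l2^1 + (39123/2)*l0^2*l1^5 + (13765059/24389)*l0^3*l2^4 + (753530931/24389)*l0^3*l1^1*l2^3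 + (83416716/841)*l0^3*l1^2*l2^2 + (3126681/29)*l0^3*l1^3*l2^1 + (38961)*l0^3*l1^4 + (31429539/97556)*l0^4*l2^3 + (30583332/841)*l0^4*l1^1*l2^2 + (2221263/29)*l0^4*l1^2*l2^1 + (162081/4)*l0^4*l1^3 + (737424/841)*l0^5*l2^2 + (618192/29)*l0^5*l1^1*l2^1 + (21384)*l0^5*l1^2 + (11664/29)*l0^6*l2^1 + (4536)*l0^6*l1^1) by (unfold l0, l1, l2; field).
  clearbody l0 l1 l2. pos_tac.
Qed.

Lemma LA_cert1 (a t : R) :
  0 <= ((32/5) + (-6/5)*a + (-2/5)*t) -> 0 <= ((-27/5) + (6/5)*a + (-204/115)*t) -> 0 <= ((0) + (0)*a + (50/23)*t) ->
  0 <= (3*(a-t)*((16-t-a)/2-t)^2 - 5*t*(a^2+2*((16-t-a)/2)^2) - 20*t^2*(16-t)) - (3*a+7*t)*((16-t-a)/2-a)^2 - 1.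
Proof.
  intros H0 H1 H2.
  set (l0 := ((32/5) + (-6/5)*a + (-2/5)*t)) in *.
  set (l1 := ((-27/5) + (6/5)*a + (-204/115)*t)) in *.
  set (l2 := ((0) + (0)*a + (50/23)*t)) in *.
  replace ((3*(a-t)*((16-t-a)/2-t)^2 - 5*t*(a^2+2*((16-t-a)/2)^2) - 20*t^2*(16-t)) - (3*a+7*t)*((16-t-a)/2-a)^2 - 1) with ((7944163/125000)*l2^3 + (385877/625)*l1^1*l2^2 + (75679/75)*l1^2*l2^1 + (4087/9)*l1^3 + (385877/625)*l0^1*l2^2 + (151358/75)*l0^1*l1^1*l2^1 + (4087/3)*l0^1*l1^2 + (96997/100)*l0^2*l2^1 + (1329)*l0^2*l1^1 + (1697/4)*l0^3) by (unfold l0, l1, l2; field).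
  clearbody l0 l1 l2. pos_tac.
Qed.

Lemma LA_cert2 (a t : R) :
  0 <= ((1) + (0)*a + (-50/23)*t) -> 0 <= ((-225/34) + (25/17)*a + (0)*t) -> 0 <= ((225/34) + (-25/17)*a + (50/23)*t) ->
  0 <= (3*(a-t)*((16-t-a)/2-t)^2 - 5*t*(a^2+2*((16-t-a)/2)^2) - 20*t^2*(16-t)) - (3*a+7*t)*((16-t-a)/2-a)^2 - 1.
Proof.
  intros H0 H1 H2.
  set (l0 := ((1) + (0)*a + (-50/23)*t)) in *.
  set (l1 := ((-225/34) + (25/17)*a + (0)*t)) in *.
  set (l2 := ((225/34) + (-25/17)*a + (50/23)*t)) in *.
  replace ((3*(a-t)*((16-t-a)/2-t)^2 - 5*t*(a^2+2*((16-t-a)/2)^2) - 20*t^2*(16-t)) - (3*a+7*t)*((16-t-a)/2-a)^2 - 1) with ((4927003/125000)*l2^3 + (4115901/25000)*l1^1*l2^2 + (23832489/125000)*l1^2*l2^1 + (7944163/125000)*l1^3 + (13459/25)*l0^1*l2^2 + (731889/625)*l0^1*l1^1*l2^1 + (385877/625)*l0^1*l1^2 + (92407/100)*l0^2*l2^1 + (96997/100)*l0^2*l1^1 + (1697/4)*l0^3) by (unfold l0, l1, l2; field).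
  clearbody l0 l1 l2. pos_tac.
Qed.

Lemma sqrt2_facts : sqrt 2 * sqrt 2 = 2 /\ 14142/10000 < sqrt 2 < 14143/10000.
Proof.
  assert (H : sqrt 2 * sqrt 2 = 2) by (apply sqrt_sqrt; lra).
  assert (0 <= sqrt 2) by apply sqrt_pos.
  split; [exact H|]. split; nra.
Qed.

Lemma sqrt_tangent (x m : R) : 0 <= x -> 0 < m -> sqrt x <= (x + m*m)/(2*m).
Proof.
  intros Hx Hm. assert (Hs := sqrt_sqrt x Hx). assert (0 <= sqrt x) by apply sqrt_pos.
  apply Rmult_le_reg_r with (2*m); [lra|].
  unfold Rdiv. rewrite Rmult_assoc, Rinv_l by lra.
  assert (0 <= (sqrt x - m)^2) by apply pow2_ge_0. nra.
Qed.

Lemma sqrt_sum2 (x y : R) : 0 <= x -> 0 <= y -> sqrt x + sqrt y <= sqrt (2*(x+y)).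
Proof.
  intros Hx Hy. assert (Hsx := sqrt_sqrt x Hx). assert (Hsy := sqrt_sqrt y Hy).
  assert (0 <= sqrt x) by apply sqrt_pos. assert (0 <= sqrt y) by apply sqrt_pos.
  rewrite <- (sqrt_square (sqrt x + sqrt y)) by lra.
  apply sqrt_le_1_alt. assert (0 <= (sqrt x - sqrt y)^2) by apply pow2_ge_0. nra.
Qed.

Lemma case1 (a b c t : R) : 0 <= a -> 0 <= b -> 0 <= c -> 0 <= t -> a + b + c + t = 16 ->
  c <= (3 + 2*sqrt 2)*t -> sqrt (b+c) + sqrt (a+c) + sqrt (a+b) <= 4 + 4*sqrt 2.
Proof.
  intros. destruct sqrt2_facts as [Hr [Hr1 Hr2]]. set (r := sqrt 2) in *. clearbody r.
  assert (E1 := sqrt_tangent (a+b) 4 ltac:(lra) ltac:(lra)).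
  assert (E2 := sqrt_tangent (a+c) (2*r) ltac:(lra) ltac:(lra)).
  assert (E3 := sqrt_tangent (b+c) (2*r) ltac:(lra) ltac:(lra)).
  assert (Q : (a + c + 2*r*(2*r))/(2*(2*r)) + (b + c + 2*r*(2*r))/(2*(2*r)) = (a+b+2*c+8*(r*r))/(4*r)).
  { field; lra. }
  rewrite Hr in Q. replace (8*2) with 16 in Q by ring.
  assert (Q2 : (a+b+2*c+16)/(4*r) <= 4 + 4*r - (a+b+4*4)/(2*4)).
  { apply Rmult_le_reg_r with (4*r); [lra|]. unfold Rdiv. rewrite Rmult_assoc, Rinv_l by lra.
    nra. }
  lra.
Qed.

Lemma P2min (a b c t : R) : 0 <= t -> a + b + c + t = 16 -> a > 58/10 * t -> a <= b -> a <= c ->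
  5*t*(a^2+b^2+c^2) + 20*t^2*(a+b+c) >= 3*(a-t)*(b-t)*(c-t) ->
  384*t + ((a-b)^2 + (b-c)^2 + (a-c)^2) >= 176.
Proof.
  intros Ht Hs Ha Hab Hac H.
  destruct (Rlt_or_le (384*t + ((a-b)^2 + (b-c)^2 + (a-c)^2)) 176) as [N|N]; [exfalso|lra].
  assert (Hk : 0 < 3*a + 7*t) by lra.
  assert (HF : (3*(a-t)*((16-t-a)/2-t)^2 - 5*t*(a^2+2*((16-t-a)/2)^2) - 20*t^2*(16-t))
               <= ((c-b)^2/4) * (3*a+7*t)).
  { assert (Ea : a = 16 - t - b - c) by lra. subst a. nra. }
  assert (HG : 6*((c-b)^2/4) < 176-384*t-2*(a-(16-t-a)/2)^2).
  { assert (Ea : a = 16 - t - b - c) by lra. subst a. nra. }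
  destruct (Rle_or_lt a (9/2)) as [Hsm|Hbig].
  - assert (L := LB_cert a t ltac:(lra) ltac:(lra) ltac:(lra)).
    assert (0 < (3*a+7*t) * (176-384*t-2*(a-(16-t-a)/2)^2 - 6*((c-b)^2/4))) by (apply Rmult_lt_0_compat; lra).
    nra.
  - assert (Hd : (c-b)^2/4 <= ((16-t-a)/2-a)^2).
    { assert (Ea : a = 16 - t - b - c) by lra. subst a. nra. }
    assert (Ht2 : t <= 46/100) by nra.
    assert (H3 : 3*a + t <= 16) by lra.
    assert (L : 0 <= (3*(a-t)*((16-t-a)/2-t)^2 - 5*t*(a^2+2*((16-t-a)/2)^2) - 20*t^2*(16-t)) - (3*a+7*t)*((16-t-a)/2-a)^2 - 1).
    { destruct (Rle_or_lt 0 ((-27/5) + (6/5)*a + (-204/115)*t)) as [Hd1|Hd1].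
      - apply LA_cert1; lra.
      - apply LA_cert2; lra. }
    assert (0 <= (3*a+7*t) * (((16-t-a)/2-a)^2 - (c-b)^2/4)) by (apply Rmult_le_pos; lra).
    nra.
Qed.

Lemma P2 (a b c t : R) : 0 <= t -> a + b + c + t = 16 -> a > 58/10 * t -> b > 58/10 * t -> c > 58/10 * t ->
  5*t*(a^2+b^2+c^2) + 20*t^2*(a+b+c) >= 3*(a-t)*(b-t)*(c-t) ->
  384*t + ((a-b)^2 + (b-c)^2 + (a-c)^2) >= 176.
Proof.
  intros Ht Hs Ha Hb Hc H.
  destruct (Rle_or_lt a b); destruct (Rle_or_lt a c); destruct (Rle_or_lt b c).
  - apply P2min; lra.
  - apply P2min; lra.
  - lra.
  - assert (X := P2min c a b t ltac:(lra) ltac:(lra) ltac:(lra) ltac:(lra) ltac:(lra) ltac:(nra)). nra.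
  - assert (X := P2min b a c t ltac:(lra) ltac:(lra) ltac:(lra) ltac:(lra) ltac:(lra) ltac:(nra)). nra.
  - assert (X := P2min c a b t ltac:(lra) ltac:(lra) ltac:(lra) ltac:(lra) ltac:(lra) ltac:(nra)). nra.
  - assert (X := P2min b a c t ltac:(lra) ltac:(lra) ltac:(lra) ltac:(lra) ltac:(lra) ltac:(nra)). nra.
  - assert (X := P2min c a b t ltac:(lra) ltac:(lra) ltac:(lra) ltac:(lra) ltac:(lra) ltac:(nra)). nra.
Qed.

Lemma final_step (a b c t : R) : 0 <= a -> 0 <= b -> 0 <= c -> 0 <= t -> a + b + c + t = 16 ->
  384*t + ((a-b)^2 + (b-c)^2 + (a-c)^2) >= 176 ->
  sqrt (b+c) + sqrt (a+c) + sqrt (a+b) <= 4 + 4*sqrt 2.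
Proof.
  intros. destruct sqrt2_facts as [Hr [Hr1 Hr2]].
  assert (HX := sqrt_sqrt (b+c) ltac:(lra)). assert (HY := sqrt_sqrt (a+c) ltac:(lra)).
  assert (HZ := sqrt_sqrt (a+b) ltac:(lra)).
  set (X := sqrt (b+c)) in *. set (Y := sqrt (a+c)) in *. set (Z := sqrt (a+b)) in *.
  assert (X0 : 0 <= X) by apply sqrt_pos. assert (Y0 : 0 <= Y) by apply sqrt_pos. assert (Z0 : 0 <= Z) by apply sqrt_pos.
  set (r := sqrt 2) in *. clearbody X Y Z r.
  assert (X4 : X <= 4) by nra. assert (Y4 : Y <= 4) by nra. assert (Z4 : Z <= 4) by nra.
  assert (D1 : (a-b)^2 <= 64*(X-Y)^2).
  { replace ((a-b)^2) with ((X-Y)^2*(X+Y)^2) by (replace (a-b) with (Y*Y-X*X) by lra; ring).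
    rewrite (Rmult_comm 64); apply Rmult_le_compat_l; [apply pow2_ge_0| nra]. }
  assert (D2 : (b-c)^2 <= 64*(Y-Z)^2).
  { replace ((b-c)^2) with ((Y-Z)^2*(Y+Z)^2) by (replace (b-c) with (Z*Z-Y*Y) by lra; ring).
    rewrite (Rmult_comm 64); apply Rmult_le_compat_l; [apply pow2_ge_0| nra]. }
  assert (D3 : (a-c)^2 <= 64*(X-Z)^2).
  { replace ((a-c)^2) with ((X-Z)^2*(X+Z)^2) by (replace (a-c) with (Z*Z-X*X) by lra; ring).
    rewrite (Rmult_comm 64); apply Rmult_le_compat_l; [apply pow2_ge_0| nra]. }
  assert (G2 : (X+Y+Z)^2 <= 93 + 1/4).
  { assert (E : (X+Y+Z)^2 = 3*(X*X+Y*Y+Z*Z) - ((X-Y)^2 + (Y-Z)^2 + (X-Z)^2)) by ring.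
    rewrite E. rewrite HX, HY, HZ. lra. }
  nra.
Qed.

Lemma AL (a b c t : R) : 0 <= a -> 0 <= b -> 0 <= c -> 0 <= t -> a + b + c + t = 16 ->
  (t <= a -> t <= b -> t <= c -> 5*t*(a^2+b^2+c^2) + 20*t^2*(a+b+c) >= 3*(a-t)*(b-t)*(c-t)) ->
  sqrt (b+c) + sqrt (a+c) + sqrt (a+b) <= 4 + 4*sqrt 2.
Proof.
  intros Ha Hb Hc Ht Hs GL. destruct sqrt2_facts as [Hr [Hr1 Hr2]].
  destruct (Rle_or_lt c ((3 + 2*sqrt 2)*t)) as [C|C].
  { apply (case1 a b c t); assumption. }
  destruct (Rle_or_lt b ((3 + 2*sqrt 2)*t)) as [B|B].
  { assert (X := case1 a c b t Ha Hc Hb Ht ltac:(lra) B).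
    rewrite (Rplus_comm c b) in X. lra. }
  destruct (Rle_or_lt a ((3 + 2*sqrt 2)*t)) as [A|A].
  { assert (X := case1 c b a t Hc Hb Ha Ht ltac:(lra) A).
    rewrite (Rplus_comm c a), (Rplus_comm b a), (Rplus_comm c b) in X. lra. }
  assert (M1 : 0 <= (sqrt 2 - 14/10) * t) by (apply Rmult_le_pos; lra).
  assert (H := GL ltac:(lra) ltac:(lra) ltac:(lra)).
  apply (final_step a b c t); try assumption.
  apply P2; try assumption; lra.
Qed.

Lemma TwoD (u1 u2 v1 v2 w1 w2 : R) :
  3*((u1^2+u2^2)*(v1^2+v2^2)*(w1^2+w2^2)) <=
  4*((v1*w1+v2*w2)^2*(u1^2+u2^2) + (u1*w1+u2*w2)^2*(v1^2+v2^2) + (u1*v1+u2*v2)^2*(w1^2+w2^2)).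
Proof.
  set (U := u1^2+u2^2). set (V := v1^2+v2^2). set (W := w1^2+w2^2).
  set (E := 4*((v1*w1+v2*w2)^2*U + (u1*w1+u2*w2)^2*V + (u1*v1+u2*v2)^2*W) - 3*(U*V*W)).
  assert (Id : E * (U*V*W) = ((u1*u1-u2*u2)*V*W+(v1*v1-v2*v2)*U*W+(w1*w1-w2*w2)*U*V)^2
                          + (2*u1*u2*V*W+2*v1*v2*U*W+2*w1*w2*U*V)^2).
  { unfold E, U, V, W. ring. }
  assert (U0 : 0 <= U) by (unfold U; nra). assert (V0 : 0 <= V) by (unfold V; nra).
  assert (W0 : 0 <= W) by (unfold W; nra).
  assert (N0 : 0 <= U*V*W) by (apply Rmult_le_pos; [apply Rmult_le_pos|]; assumption).
  enough (0 <= E) by (unfold E in *; lra).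
  destruct (Rle_lt_or_eq_dec 0 (U*V*W) N0) as [Np|Nz].
  - destruct (Rle_or_lt 0 E) as [ok|bad]; [exact ok|].
    assert (E * (U*V*W) < 0) by (apply Rmult_neg_pos; assumption).
    assert (0 <= ((u1*u1-u2*u2)*V*W+(v1*v1-v2*v2)*U*W+(w1*w1-w2*w2)*U*V)^2) by apply pow2_ge_0.
    assert (0 <= (2*u1*u2*V*W+2*v1*v2*U*W+2*w1*w2*U*V)^2) by apply pow2_ge_0.
    lra.
  - symmetry in Nz. apply Rmult_integral in Nz. destruct Nz as [Nz|Nz].
    + apply Rmult_integral in Nz. destruct Nz as [Nz|Nz].
      * assert (u1 = 0) by (unfold U in Nz; nra). assert (u2 = 0) by (unfold U in Nz; nra).
        unfold E, U in *. subst. nra.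
      * assert (v1 = 0) by (unfold V in Nz; nra). assert (v2 = 0) by (unfold V in Nz; nra).
        unfold E, V in *. subst. nra.
    + assert (w1 = 0) by (unfold W in Nz; nra). assert (w2 = 0) by (unfold W in Nz; nra).
      unfold E, W in *. subst. nra.
Qed.

Lemma CS3 (x1 x2 x3 y1 y2 y3 : R) : (x1*y1+x2*y2+x3*y3)^2 <= (x1^2+x2^2+x3^2)*(y1^2+y2^2+y3^2).
Proof.
  assert (Id: (x1^2+x2^2+x3^2)*(y1^2+y2^2+y3^2) - (x1*y1+x2*y2+x3*y3)^2 = (x1*y2-x2*y1)^2 + (x1*y3-x3*y1)^2 + (x2*y3-x3*y2)^2) by ring.
  assert (0 <= (x1*y2-x2*y1)^2) by apply pow2_ge_0. assert (0 <= (x1*y3-x3*y1)^2) by apply pow2_ge_0.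
  assert (0 <= (x2*y3-x3*y2)^2) by apply pow2_ge_0. lra.
Qed.

Lemma GLlem (A1 A2 al B1 B2 be C1 C2 ga S1 S2 si : R) :
  (S1*A1+S2*A2+si*al) + (B1*C1+B2*C2+be*ga) = 0 ->
  (S1*B1+S2*B2+si*be) + (A1*C1+A2*C2+al*ga) = 0 ->
  (S1*C1+S2*C2+si*ga) + (A1*B1+A2*B2+al*be) = 0 ->
  al^2 <= si^2 -> be^2 <= si^2 -> ga^2 <= si^2 ->
  let a := A1^2+A2^2+al^2 in let b := B1^2+B2^2+be^2 in let c := C1^2+C2^2+ga^2 in
  let t := S1^2+S2^2+si^2 in
  t <= a -> t <= b -> t <= c ->
  5*t*(a^2+b^2+c^2) + 20*t^2*(a+b+c) >= 3*(a-t)*(b-t)*(c-t).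
Proof.
  intros R1 R2 R3 Hal Hbe Hga a b c t Ha Hb Hc.
  assert (T2 := TwoD A1 A2 B1 B2 C1 C2).
  set (ha := A1^2+A2^2) in *. set (hb := B1^2+B2^2) in *. set (hc := C1^2+C2^2) in *.
  set (e1 := B1*C1+B2*C2) in *. set (e2 := A1*C1+A2*C2) in *. set (e3 := A1*B1+A2*B2) in *.
  assert (t0 : si^2 <= t) by (unfold t; nra).
  assert (ha1 : ha <= a) by (unfold a, ha; nra). assert (ha2 : a - t <= ha) by (unfold a, ha; nra).
  assert (hb1 : hb <= b) by (unfold b, hb; nra). assert (hb2 : b - t <= hb) by (unfold b, hb; nra).
  assert (hc1 : hc <= c) by (unfold c, hc; nra). assert (hc2 : c - t <= hc) by (unfold c, hc; nra).
  set (sA := S1*A1+S2*A2+si*al) in *. set (sB := S1*B1+S2*B2+si*be) in *. set (sC := S1*C1+S2*C2+si*ga) in *.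
  assert (CA : sA^2 <= t*a).
  { unfold sA, t, a. apply CS3. }
  assert (CB : sB^2 <= t*b).
  { unfold sB, t, b. apply CS3. }
  assert (CC : sC^2 <= t*c).
  { unfold sC, t, c. apply CS3. }
  assert (si4 : si^2*si^2 <= t*t) by (apply Rmult_le_compat; nra).
  assert (P1 : (be*ga)^2 <= t^2).
  { replace ((be*ga)^2) with (be^2*ga^2) by ring. 
    assert (be^2*ga^2 <= si^2*si^2) by (apply Rmult_le_compat; nra). nra. }
  assert (P2 : (al*ga)^2 <= t^2).
  { replace ((al*ga)^2) with (al^2*ga^2) by ring. 
    assert (al^2*ga^2 <= si^2*si^2) by (apply Rmult_le_compat; nra). nra. }
  assert (P3 : (al*be)^2 <= t^2).
  { replace ((al*be)^2) with (al^2*be^2) by ring. 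
    assert (al^2*be^2 <= si^2*si^2) by (apply Rmult_le_compat; nra). nra. }
  assert (E1 : e1^2 <= 5/4*(t*a) + 5*t^2).
  { replace e1 with (-sA - be*ga) by lra. assert (0 <= (sA/2 - 2*(be*ga))^2) by apply pow2_ge_0. nra. }
  assert (E2 : e2^2 <= 5/4*(t*b) + 5*t^2).
  { replace e2 with (-sB - al*ga) by lra. assert (0 <= (sB/2 - 2*(al*ga))^2) by apply pow2_ge_0. nra. }
  assert (E3 : e3^2 <= 5/4*(t*c) + 5*t^2).
  { replace e3 with (-sC - al*be) by lra. assert (0 <= (sC/2 - 2*(al*be))^2) by apply pow2_ge_0. nra. }
  assert (ha0 : 0 <= ha) by (unfold ha; nra). assert (hb0 : 0 <= hb) by (unfold hb; nra).
  assert (hc0 : 0 <= hc) by (unfold hc; nra).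
  assert (t0' : 0 <= t) by (unfold t; nra).
  assert (L1 : e1^2*ha <= (5/4*(t*a) + 5*t^2)*a).
  { apply Rmult_le_compat; try nra. }
  assert (L2 : e2^2*hb <= (5/4*(t*b) + 5*t^2)*b).
  { apply Rmult_le_compat; try nra. }
  assert (L3 : e3^2*hc <= (5/4*(t*c) + 5*t^2)*c).
  { apply Rmult_le_compat; try nra. }
  assert (Pr : (a-t)*(b-t)*(c-t) <= ha*hb*hc).
  { apply Rmult_le_compat; try nra; try (apply Rmult_le_compat; nra). }
  clearbody ha hb hc e1 e2 e3 a b c t sA sB sC.
  nra.
Qed.

Lemma sq_le (al si p q : R) : 0 <= p -> 0 <= q -> si - al = p -> si + al = q -> al^2 <= si^2.
Proof. intros. assert (0 <= p*q) by (apply Rmult_le_pos; auto). nra. Qed.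

Lemma pair_bound (x1 y1 z1 x2 y2 z2 x3 y3 z3 x4 y4 z4 : R) :
  sqrt ((x1-x2)^2+(y1-y2)^2+(z1-z2)^2) + sqrt ((x3-x4)^2+(y3-y4)^2+(z3-z4)^2)
  <= sqrt (((x1-x2+x3-x4)^2+(y1-y2+y3-y4)^2+(z1-z2+z3-z4)^2) + ((x1-x2-x3+x4)^2+(y1-y2-y3+y4)^2+(z1-z2-z3+z4)^2)).
Proof.
  eapply Rle_trans; [apply sqrt_sum2; repeat apply Rplus_le_le_0_compat; apply pow2_ge_0|].
  right. f_equal. ring.
Qed.

Theorem mainTheorem1 :
  (forall p1 p2 p3 p4 : pt,
      in_upper_hemisphere p1 -> in_upper_hemisphere p2 ->
      in_upper_hemisphere p3 -> in_upper_hemisphere p4 ->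
      sum_pair_dists p1 p2 p3 p4 <= 4 + 4 * sqrt 2) /\
  (exists p1 p2 p3 p4 : pt,
      in_upper_hemisphere p1 /\ in_upper_hemisphere p2 /\
      in_upper_hemisphere p3 /\ in_upper_hemisphere p4 /\
      sum_pair_dists p1 p2 p3 p4 = 4 + 4 * sqrt 2).
Proof.
  split.
  - intros [[x1 y1] z1] [[x2 y2] z2] [[x3 y3] z3] [[x4 y4] z4] H1 H2 H3 H4.
    unfold in_upper_hemisphere in *. destruct H1 as [h1 hz1]. destruct H2 as [h2 hz2].
    destruct H3 as [h3 hz3]. destruct H4 as [h4 hz4].
    unfold sum_pair_dists, dist3.
    assert (Q1 := pair_bound x1 y1 z1 x2 y2 z2 x3 y3 z3 x4 y4 z4).
    assert (Q2 := pair_bound x1 y1 z1 x3 y3 z3 x2 y2 z2 x4 y4 z4).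
    assert (Q3 := pair_bound x1 y1 z1 x4 y4 z4 x2 y2 z2 x3 y3 z3).
    set (a := (x1+x2-x3-x4)^2+(y1+y2-y3-y4)^2+(z1+z2-z3-z4)^2).
    set (b := (x1-x2+x3-x4)^2+(y1-y2+y3-y4)^2+(z1-z2+z3-z4)^2).
    set (c := (x1-x2-x3+x4)^2+(y1-y2-y3+y4)^2+(z1-z2-z3+z4)^2).
    set (t := (x1+x2+x3+x4)^2+(y1+y2+y3+y4)^2+(z1+z2+z3+z4)^2).
    replace (((x1-x3+x2-x4)^2+(y1-y3+y2-y4)^2+(z1-z3+z2-z4)^2) + ((x1-x3-x2+x4)^2+(y1-y3-y2+y4)^2+(z1-z3-z2+z4)^2))
      with (a + c) in Q2 by (unfold a, c; ring).
    replace (((x1-x4+x2-x3)^2+(y1-y4+y2-y3)^2+(z1-z4+z2-z3)^2) + ((x1-x4-x2+x3)^2+(y1-y4-y2+y3)^2+(z1-z4-z2+z3)^2))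
      with (a + b) in Q3 by (unfold a, b; ring).
    fold b c in Q1.
    assert (AL' : sqrt (b+c) + sqrt (a+c) + sqrt (a+b) <= 4 + 4*sqrt 2).
    { apply (AL a b c t).
      - unfold a; repeat apply Rplus_le_le_0_compat; apply pow2_ge_0.
      - unfold b; repeat apply Rplus_le_le_0_compat; apply pow2_ge_0.
      - unfold c; repeat apply Rplus_le_le_0_compat; apply pow2_ge_0.
      - unfold t; repeat apply Rplus_le_le_0_compat; apply pow2_ge_0.
      - assert (Id : a + b + c + t = 4*((x1^2+y1^2+z1^2)+(x2^2+y2^2+z2^2)+(x3^2+y3^2+z3^2)+(x4^2+y4^2+z4^2)))
          by (unfold a, b, c, t; ring).
        lra.
      - intros Ha Hb Hc.
        apply (GLlem (x1+x2-x3-x4) (y1+y2-y3-y4) (z1+z2-z3-z4)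
                     (x1-x2+x3-x4) (y1-y2+y3-y4) (z1-z2+z3-z4)
                     (x1-x2-x3+x4) (y1-y2-y3+y4) (z1-z2-z3+z4)
                     (x1+x2+x3+x4) (y1+y2+y3+y4) (z1+z2+z3+z4)).
        + assert (Id : ((x1+x2+x3+x4)*(x1+x2-x3-x4)+(y1+y2+y3+y4)*(y1+y2-y3-y4)+(z1+z2+z3+z4)*(z1+z2-z3-z4)) +
             ((x1-x2+x3-x4)*(x1-x2-x3+x4)+(y1-y2+y3-y4)*(y1-y2-y3+y4)+(z1-z2+z3-z4)*(z1-z2-z3+z4))
             = 2*((x1^2+y1^2+z1^2)+(x2^2+y2^2+z2^2)-(x3^2+y3^2+z3^2)-(x4^2+y4^2+z4^2))) by ring.
          lra.
        + assert (Id : ((x1+x2+x3+x4)*(x1-x2+x3-x4)+(y1+y2+y3+y4)*(y1-y2+y3-y4)+(z1+z2+z3+z4)*(z1-z2+z3-z4)) +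
             ((x1+x2-x3-x4)*(x1-x2-x3+x4)+(y1+y2-y3-y4)*(y1-y2-y3+y4)+(z1+z2-z3-z4)*(z1-z2-z3+z4))
             = 2*((x1^2+y1^2+z1^2)-(x2^2+y2^2+z2^2)+(x3^2+y3^2+z3^2)-(x4^2+y4^2+z4^2))) by ring.
          lra.
        + assert (Id : ((x1+x2+x3+x4)*(x1-x2-x3+x4)+(y1+y2+y3+y4)*(y1-y2-y3+y4)+(z1+z2+z3+z4)*(z1-z2-z3+z4)) +
             ((x1+x2-x3-x4)*(x1-x2+x3-x4)+(y1+y2-y3-y4)*(y1-y2+y3-y4)+(z1+z2-z3-z4)*(z1-z2+z3-z4))
             = 2*((x1^2+y1^2+z1^2)-(x2^2+y2^2+z2^2)-(x3^2+y3^2+z3^2)+(x4^2+y4^2+z4^2))) by ring.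
          lra.
        + apply (sq_le _ _ (2*(z3+z4)) (2*(z1+z2))); lra.
        + apply (sq_le _ _ (2*(z2+z4)) (2*(z1+z3))); lra.
        + apply (sq_le _ _ (2*(z2+z3)) (2*(z1+z4))); lra.
        + exact Ha.
        + exact Hb.
        + exact Hc. }
    lra.
  - exists (1,0,0), (0,1,0), (-1,0,0), (0,-1,0).
    unfold in_upper_hemisphere, sum_pair_dists, dist3.
    split; [split; [ring|lra]|]. split; [split; [ring|lra]|].
    split; [split; [ring|lra]|]. split; [split; [ring|lra]|].
    replace ((1 - 0) ^ 2 + (0 - 1) ^ 2 + (0 - 0) ^ 2) with 2 by ring.
    replace ((1 - -1) ^ 2 + (0 - 0) ^ 2 + (0 - 0) ^ 2) with (2*2) by ring.
    replace ((1 - 0) ^ 2 + (0 - -1) ^ 2 + (0 - 0) ^ 2) with 2 by ring.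
    replace ((0 - -1) ^ 2 + (1 - 0) ^ 2 + (0 - 0) ^ 2) with 2 by ring.
    replace ((0 - 0) ^ 2 + (1 - -1) ^ 2 + (0 - 0) ^ 2) with (2*2) by ring.
    replace ((-1 - 0) ^ 2 + (0 - -1) ^ 2 + (0 - 0) ^ 2) with 2 by ring.
    rewrite sqrt_square by lra. ring.
Qed.
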